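(* Let $\mathfrak p=(p,q)\in\mathbb Z_+^2$ and $\Gamma=\Gamma_{\mathfrak p}$. Then $\bigcup_{j=1}^{pq}B_j^\Gamma=[-4,4]$ and $\max B_j^\Gamma\ge\min B_{j+1}^\Gamma$ for every $1\le j<pq$.
   Context: For $r\ge3$ and $\theta\in\mathbb R$, $\Delta_\theta^r\in\mathbb C^{r\times r}$ is the Hermitian matrix with $1$ on the sub- and superdiagonals, $0$ on the diagonal, entry $e^{-i\theta}$ in position $(1,r)$ and $e^{i\theta}$ in position $(r,1)$, all other entries $0$; $\Delta_\theta^1=2\cos\theta$, $\Delta_\theta^2=\begin{bmatrix}0&1+e^{-i\theta}\\1+e^{i\theta}&0\end{bmatrix}$. $\Gamma_{\mathfrak p}=([0,p)\times[0,q))\cap\mathbb Z^2$, $\Delta^{\Gamma}_{\theta,\varphi}=\Delta_\theta^p\otimes I_q+I_p\otimes\Delta_\varphi^q$, with ordered eigenvalues $\lambda_1^\Gamma(\theta,\varphi)\le\cdots\le\lambda_{pq}^\Gamma(\theta,\varphi)$ and bands $B_j^\Gamma=\{\lambda_j^\Gamma(\theta,\varphi):(\theta,\varphi)\in[0,\pi]^2\}$. *)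

(* Defs.v *)
From HB Require Import structures.
From Stdlib Require Import Reals Lra ClassicalEpsilon FunctionalExtensionality.
From mathcomp Require Import all_boot all_order all_algebra.

Set Implicit Arguments.
Unset Strict Implicit.
Unset Printing Implicit Defensive.

Record C := mkC { Cre : R ; Cim : R }.

Definition C_eqb (x y : C) : bool :=
  if excluded_middle_informative (x = y) then true else false.

Lemma C_eqP : Equality.axiom C_eqb.
Proof.
move=> x y; rewrite /C_eqb; case: excluded_middle_informative => h.
  by apply: ReflectT.
by apply: ReflectF.
Qed.

HB.instance Definition _ := hasDecEq.Build C C_eqP.

Definition C_find (P : pred C) (n : nat) : option C :=
  match excluded_middle_informative (exists x, P x) with
  | left h => Some (proj1_sig (constructive_indefinite_description _ h))
  | right _ => None
  end.

Lemma C_find_correct P n x : C_find P n = Some x -> P x.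
Proof.
rewrite /C_find; case: excluded_middle_informative => // h [<-].
exact: proj2_sig (constructive_indefinite_description _ h).
Qed.

Lemma C_find_complete (P : pred C) : (exists x, P x) -> exists n, C_find P n.
Proof.
move=> h; exists 0%N; rewrite /C_find.
by case: excluded_middle_informative.
Qed.

Lemma C_find_ext (P Q : pred C) : P =1 Q -> C_find P =1 C_find Q.
Proof.
by move=> /functional_extensionality ->.
Qed.

HB.instance Definition _ :=
  hasChoice.Build C C_find_correct C_find_complete C_find_ext.

Definition C0 : C := mkC (IZR 0) (IZR 0).
Definition C1 : C := mkC (IZR 1) (IZR 0).
Definition Cadd (x y : C) : C := mkC (Rplus (Cre x) (Cre y)) (Rplus (Cim x) (Cim y)).
Definition Copp (x : C) : C := mkC (Ropp (Cre x)) (Ropp (Cim x)).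
Definition Cmul (x y : C) : C :=
  mkC (Rminus (Rmult (Cre x) (Cre y)) (Rmult (Cim x) (Cim y)))
      (Rplus (Rmult (Cre x) (Cim y)) (Rmult (Cim x) (Cre y))).

Lemma Cext (x y : C) : Cre x = Cre y -> Cim x = Cim y -> x = y.
Proof. by case: x; case: y => ? ? ? ? /= -> ->. Qed.

Lemma CaddA : associative Cadd.
Proof. move=> x y z; apply: Cext => /=; ring. Qed.
Lemma CaddC : commutative Cadd.
Proof. move=> x y; apply: Cext => /=; ring. Qed.
Lemma Cadd0 : left_id C0 Cadd.
Proof. move=> x; apply: Cext => /=; ring. Qed.
Lemma CaddN : left_inverse C0 Copp Cadd.
Proof. move=> x; apply: Cext => /=; ring. Qed.

HB.instance Definition _ := GRing.isZmodule.Build C CaddA CaddC Cadd0 CaddN.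

Lemma CmulA : associative Cmul.
Proof. move=> x y z; apply: Cext => /=; ring. Qed.
Lemma CmulC : commutative Cmul.
Proof. move=> x y; apply: Cext => /=; ring. Qed.
Lemma Cmul1 : left_id C1 Cmul.
Proof. move=> x; apply: Cext => /=; ring. Qed.
Lemma CmulDl : left_distributive Cmul Cadd.
Proof. move=> x y z; apply: Cext => /=; ring. Qed.
Lemma C1_neq0 : C1 != C0.
Proof.
apply/eqP => h; have := f_equal Cre h; rewrite /= => h'; lra.
Qed.

HB.instance Definition _ :=
  GRing.Zmodule_isComNzRing.Build C CmulA CmulC Cmul1 CmulDl C1_neq0.

Definition RtoC (x : R) : C := mkC x (IZR 0).
Definition expi (t : R) : C := mkC (cos t) (sin t).

Local Open Scope ring_scope.

(* Delta_theta^r (0-indexed): 1 on the sub-/superdiagonal, e^{-i theta} at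
   (0, r-1) and e^{i theta} at (r-1, 0), entries being ADDED.  For r >= 3 this
   is exactly the paper's matrix; for r = 2 it gives
   [[0, 1 + e^{-i theta}], [1 + e^{i theta}, 0]], and for r = 1 it gives
   e^{-i theta} + e^{i theta} = 2 cos theta, matching the paper's special cases. *)
Definition Delta (r : nat) (theta : R) : 'M[C]_r :=
  \matrix_(i < r, j < r)
    ((if (i == j.+1 :> nat) || (j == i.+1 :> nat) then 1 else 0)
     + (if (i == 0%N :> nat) && (j == r.-1 :> nat) then expi (Ropp theta) else 0)
     + (if (i == r.-1 :> nat) && (j == 0%N :> nat) then expi theta else 0)).

(* Kronecker product with the standard index ordering k = a * q + b. *)
Lemma kron_div_lt_nat p q k : (k < p * q)%N -> (k %/ q < p)%N.
Proof.
case: q => [|q] hk; first by move: hk; rewrite muln0.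
by rewrite ltn_divLR.
Qed.

Lemma kron_mod_lt_nat p q k : (k < p * q)%N -> (k %% q < q)%N.
Proof.
case: q => [|q] hk; first by move: hk; rewrite muln0.
by rewrite ltn_mod.
Qed.

Lemma kron_div_lt p q (k : 'I_(p * q)) : (k %/ q < p)%N.
Proof. exact: kron_div_lt_nat (ltn_ord k). Qed.

Lemma kron_mod_lt p q (k : 'I_(p * q)) : (k %% q < q)%N.
Proof. exact: kron_mod_lt_nat (ltn_ord k). Qed.

Definition kron_fst p q (k : 'I_(p * q)) : 'I_p := Ordinal (kron_div_lt k).
Definition kron_snd p q (k : 'I_(p * q)) : 'I_q := Ordinal (kron_mod_lt k).

Definition kronmx p q (A : 'M[C]_p) (B : 'M[C]_q) : 'M[C]_(p * q) :=
  \matrix_(i, j) (A (kron_fst i) (kron_fst j) * B (kron_snd i) (kron_snd j)).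

Definition DeltaG (p q : nat) (theta phi : R) : 'M[C]_(p * q) :=
  kronmx (Delta p theta) 1%:M + kronmx 1%:M (Delta q phi).

Definition ordered_eigs n (A : 'M[C]_n) (l : 'I_n -> R) : Prop :=
  (forall i j : 'I_n, (i <= j)%N -> Rle (l i) (l j)) /\
  char_poly A = \prod_(i < n) ('X - (RtoC (l i))%:P).

(* The band B_j^Gamma (j 0-indexed): values of lambda_j over [0,pi]^2. *)
Definition band (p q : nat) (j : 'I_(p * q)) (x : R) : Prop :=
  exists theta phi : R,
    Rle 0 theta /\ Rle theta PI /\ Rle 0 phi /\ Rle phi PI /\
    exists l : 'I_(p * q) -> R,
      ordered_eigs (DeltaG p q theta phi) l /\ l j = x.

Definition is_max_of (S : R -> Prop) (M : R) : Prop :=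
  S M /\ forall x, S x -> Rle x M.
Definition is_min_of (S : R -> Prop) (m : R) : Prop :=
  S m /\ forall x, S x -> Rle m x.

Arguments band : clear implicits.
Arguments DeltaG : clear implicits.

(* Main.v *)
Require Import Defs.
From Stdlib Require Import Reals Lra ClassicalEpsilon.
From HB Require Import structures.
From mathcomp Require Import all_boot all_order all_algebra.
From mathcomp Require Import Rstruct zify.
Require Import Defs.
Set Implicit Arguments. Unset Strict Implicit. Unset Printing Implicit Defensive.
Import Order.TTheory GRing.Theory Num.Theory.



Lemma CreD (x y : C) : Cre (x + y)%R = Rplus (Cre x) (Cre y). Proof. by []. Qed.
Lemma CimD (x y : C) : Cim (x + y)%R = Rplus (Cim x) (Cim y). Proof. by []. Qed.
Lemma CreM (x y : C) : Cre (x * y)%R = Rminus (Rmult (Cre x) (Cre y)) (Rmult (Cim x) (Cim y)). Proof. by []. Qed.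
Lemma CimM (x y : C) : Cim (x * y)%R = Rplus (Rmult (Cre x) (Cim y)) (Rmult (Cim x) (Cre y)). Proof. by []. Qed.
Lemma CreN (x : C) : Cre (- x)%R = Ropp (Cre x). Proof. by []. Qed.
Lemma CimN (x : C) : Cim (- x)%R = Ropp (Cim x). Proof. by []. Qed.
Lemma Cre0 : Cre 0%R = IZR 0. Proof. by []. Qed.
Lemma Cim0 : Cim 0%R = IZR 0. Proof. by []. Qed.
Lemma Cre1 : Cre 1%R = IZR 1. Proof. by []. Qed.
Lemma Cim1 : Cim 1%R = IZR 0. Proof. by []. Qed.

Definition Cinv (x : C) : C :=
  mkC (Rdiv (Cre x) (Rplus (Rmult (Cre x) (Cre x)) (Rmult (Cim x) (Cim x))))
      (Rdiv (Ropp (Cim x)) (Rplus (Rmult (Cre x) (Cre x)) (Rmult (Cim x) (Cim x)))).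

Lemma Cnorm_neq0 (x : C) : x != 0%R ->
  Rplus (Rmult (Cre x) (Cre x)) (Rmult (Cim x) (Cim x)) <> IZR 0.
Proof.
move=> /eqP hx h; apply: hx; case: x h => a b /= h.
have ha : a = IZR 0 by nra.
have hb : b = IZR 0 by nra.
by rewrite ha hb.
Qed.

Lemma CmulVf (x : C) : x != 0%R -> (Cinv x * x)%R = 1%R.
Proof.
move=> /Cnorm_neq0 h; apply: Cext; rewrite ?CreM ?CimM /= /Rdiv.
  by field.
by field.
Qed.

Lemma Cinv0 : Cinv 0%R = 0%R.
Proof. by apply: Cext; rewrite /= /Rdiv; ring. Qed.

HB.instance Definition _ := GRing.ComNzRing_isField.Build C CmulVf Cinv0.

Section chunkA.

Local Open Scope R_scope.

Lemma expi_add a b : (expi a * expi b)%R = expi (a + b).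
Proof. apply: Cext; rewrite ?CreM ?CimM /= ?cos_plus ?sin_plus; ring. Qed.

Lemma expi0 : expi 0 = 1%R.
Proof. by apply: Cext; rewrite /= ?cos_0 ?sin_0. Qed.

Lemma expiX a (n : nat) : (expi a ^+ n)%R = expi (INR n * a).
Proof.
elim: n => [|n IH]; first by rewrite expr0 /= Rmult_0_l expi0.
by rewrite exprS IH expi_add S_INR; congr expi; ring.
Qed.

Lemma expiN a : (expi (- a) * expi a)%R = 1%R.
Proof. by rewrite expi_add Rplus_opp_l expi0. Qed.

Lemma expi_period a (k : nat) : expi (a + 2 * INR k * PI) = expi a.
Proof.
apply: Cext => /=; first by rewrite cos_period.
by rewrite sin_period.
Qed.

Lemma RtoCD x y : RtoC (x + y) = (RtoC x + RtoC y)%R.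
Proof. by apply: Cext => /=; ring. Qed.

Lemma expi_addN a : (expi a + expi (- a))%R = RtoC (2 * cos a).
Proof. apply: Cext; rewrite /= ?cos_neg ?sin_neg; ring. Qed.

Lemma RtoC_inj : injective RtoC.
Proof. by move=> x y [ ]. Qed.

Lemma expi_inj a b : 0 < b - a < 2 * PI -> expi a <> expi b.
Proof.
move=> [h1 h2] he.
have hc : cos a = cos b by move: (f_equal Cre he).
have hs : sin a = sin b by move: (f_equal Cim he).
have hsin : sin (b - a) = 0 by rewrite sin_minus hc hs; ring.
have hcos : cos (b - a) = 1.
  rewrite cos_minus hc hs; have := sin2_cos2 b; rewrite /Rsqr; lra.
have [h|[h|h]] := sin_eq_O_2PI_0 (b - a) (Rlt_le _ _ h1) (Rlt_le _ _ h2) hsin.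
- lra.
- by rewrite h cos_PI in hcos; lra.
- lra.
Qed.

End chunkA.

Section chunkB.

Local Open Scope R_scope.

Definition ang (r : nat) (t : R) (k : nat) : R := (t + 2 * INR k * PI) / INR r.
Definition zz r t k : C := expi (ang r t k).
Definition zb r t k : C := expi (- ang r t k).

Lemma zbz r t k : (zb r t k * zz r t k)%R = 1%R.
Proof. exact: expiN. Qed.

Lemma zzX r t k : (0 < r)%N -> (zz r t k ^+ r)%R = expi t.
Proof.
move=> hr; rewrite /zz expiX /ang.
have hr' : INR r <> 0 by apply: not_0_INR; case: r hr.
rewrite -(expi_period t k); congr expi; field; exact: hr'.
Qed.

Lemma zbX r t k : (0 < r)%N -> (zb r t k ^+ r)%R = expi (- t).
Proof.
move=> hr; rewrite /zb expiX /ang.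
have hr' : INR r <> 0 by apply: not_0_INR; case: r hr.
rewrite (_ : INR r * _ = - t - 2 * INR k * PI); last by field.
rewrite -(expi_period (- t - 2 * INR k * PI) k); congr expi; ring.
Qed.

Definition dd r t (k : nat) : R := 2 * cos (ang r t k).

Local Open Scope ring_scope.

Definition Fm r t : 'M[C]_r := \matrix_(m < r, k < r) (zz r t k ^+ m).
Definition Dm r t : 'M[C]_r := diag_mx (\row_(k < r) RtoC (dd r t k)).

Lemma sum_ind r (a : nat) (c : C) (v : nat -> C) :
  \sum_(j < r) (if (j : nat) == a then c else 0) * v j = if (a < r)%N then c * v a else 0.
Proof.
case: ltnP => ha.
  rewrite (bigD1 (Ordinal ha)) //= eqxx big1 ?addr0 // => j hj.
  case: eqP => [hja|_]; last by rewrite mul0r.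
  by case/eqP: hj; apply: val_inj.
rewrite big1 // => j _; case: eqP => [hja|]; last by rewrite mul0r.
by move: (ltn_ord j); rewrite hja ltnNge ha.
Qed.

Lemma Delta_row r t (m : 'I_r) (v : nat -> C) :
  \sum_(j < r) Delta r t m j * v j =
    (if (0 < m)%N then v m.-1 else expi (Ropp t) * v r.-1)
  + (if (m.+1 < r)%N then v m.+1 else expi t * v 0%N).
Proof.
have E : forall j : 'I_r, Delta r t m j * v j =
   (if (j : nat) == m.-1 then (if (0 < m)%N then 1 else 0) else 0) * v j
 + (if (j : nat) == m.+1 then 1 else 0) * v j
 + (if (j : nat) == r.-1 then (if (m : nat) == 0%N then expi (Ropp t) else 0) else 0) * v j
 + (if (j : nat) == 0%N then (if (m : nat) == r.-1 then expi t else 0) else 0) * v j.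
  move=> j; rewrite mxE.
  have -> : (if ((m : nat) == j.+1) || ((j : nat) == m.+1) then (1 : C) else 0) =
     (if (j : nat) == m.-1 then (if (0 < m)%N then 1 else 0) else 0)
   + (if (j : nat) == m.+1 then 1 else 0).
    case: m => m hm /=; case: j => j hj /=.
    case: m hm => [|m] hm /=.
      by case: (j == 0%N); case: (j == 1%N); rewrite /= ?add0r ?addr0.
    rewrite eqSS (eq_sym m j); case: (eqVneq j m) => [->|h] /=.
      by rewrite (_ : (m == m.+2) = false) ?addr0 //; apply/eqP; lia.
    by rewrite add0r.
  have -> : (if ((m : nat) == 0%N) && ((j : nat) == r.-1) then expi (Ropp t) else 0) =
    (if (j : nat) == r.-1 then (if (m : nat) == 0%N then expi (Ropp t) else 0) else 0).
    by case: ((m : nat) == 0%N); case: ((j : nat) == r.-1).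
  have -> : (if ((m : nat) == r.-1) && ((j : nat) == 0%N) then expi t else 0) =
    (if (j : nat) == 0%N then (if (m : nat) == r.-1 then expi t else 0) else 0).
    by case: ((m : nat) == r.-1); case: ((j : nat) == 0%N).
  by rewrite !mulrDl.
rewrite (eq_bigr _ (fun j _ => E j)) !big_split /= !sum_ind.
have hm := ltn_ord m.
have hr : (0 < r)%N by apply: leq_ltn_trans hm.
have -> : (m.-1 < r)%N by apply: leq_ltn_trans (leq_pred _) hm.
have -> : (r.-1 < r)%N by rewrite prednK.
rewrite hr.
have [m0|mpos] := posnP m.
  rewrite m0 /= mul0r add0r.
  case: ltnP => h1.
    rewrite (_ : (0%N == r.-1) = false); last by apply/eqP; lia.
    by rewrite mul0r !addr0 mul1r addrC.
  rewrite (_ : (0%N == r.-1) = true); last by apply/eqP; lia.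
  by rewrite add0r.
rewrite mul1r.
rewrite mul0r addr0.
case: ltnP => h1.
  rewrite (_ : ((m : nat) == r.-1) = false); last by apply/eqP; lia.
  by rewrite mul0r addr0 mul1r.
rewrite (_ : ((m : nat) == r.-1) = true); last by apply/eqP; lia.
by rewrite addr0.
Qed.

Lemma Delta_F r t : Delta r t *m Fm r t = Fm r t *m Dm r t.
Proof.
apply/matrixP => m k.
rewrite mul_mx_diag mxE [LHS]mxE.
rewrite (eq_bigr (fun j : 'I_r => Delta r t m j * (zz r t k ^+ j))); last first.
  by move=> j _; rewrite [Fm r t j k]mxE.
rewrite (@Delta_row r t m (fun j => zz r t k ^+ j)) !mxE.
have hm := ltn_ord m.
have hr : (0 < r)%N by apply: leq_ltn_trans hm.
rewrite /dd -expi_addN -/(zz r t k) -/(zb r t k).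
set z := zz r t k; set b := zb r t k.
have bz : b * z = 1 by exact: zbz.
have zr : z ^+ r = expi t by exact: zzX.
have br : b ^+ r = expi (Ropp t) by exact: zbX.
have -> : (if (0 < m)%N then z ^+ m.-1 else expi (Ropp t) * z ^+ r.-1) = b * z ^+ m.
  have [m0|mpos] := posnP m.
    rewrite m0 expr0 mulr1 -br (_ : b ^+ r = b * b ^+ r.-1); last by rewrite -exprS prednK.
    by rewrite -mulrA -exprMn bz expr1n mulr1.
  by rewrite -(prednK mpos) exprS mulrA bz mul1r.
have -> : (if (m.+1 < r)%N then z ^+ m.+1 else expi t * z ^+ 0) = z ^+ m * z.
  case: ltnP => h1; first by rewrite exprSr.
  by rewrite expr0 mulr1 -zr -exprSr; congr (_ ^+ _); lia.
by rewrite mulrDr addrC [b * _]mulrC.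
Qed.

End chunkB.

Section chunkCc.

Local Open Scope R_scope.

Lemma ang_diff r t (i j : nat) : (i < j < r)%N ->
  0 < ang r t j - ang r t i < 2 * PI.
Proof.
move=> /andP [hij hjr].
have hr : (0 < INR r) by apply: lt_0_INR; lia.
have h1 : INR i < INR j by apply: lt_INR; lia.
have h2 : INR j < INR r by apply: lt_INR; lia.
have h0 : 0 <= INR i by apply: pos_INR.
have E : ang r t j - ang r t i = 2 * PI * ((INR j - INR i) / INR r).
  rewrite /ang; field; lra.
rewrite E; have := PI_RGT_0 => hpi.
have h3 : 0 < (INR j - INR i) / INR r.
  apply: Rdiv_lt_0_compat; lra.
have h4 : (INR j - INR i) / INR r < 1.
  apply/(Rmult_lt_reg_r (INR r)) => //; rewrite /Rdiv Rmult_assoc Rinv_l; lra.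
split; nra.
Qed.

Local Open Scope ring_scope.

Lemma Fm_unit r t : Fm r t \in unitmx.
Proof.
have -> : Fm r t = Vandermonde r (\row_(k < r) zz r t k).
  by apply/matrixP => i j; rewrite !mxE.
rewrite unitmxE det_Vandermonde unitfE.
apply/prodf_neq0 => i _; apply/prodf_neq0 => j hij.
rewrite !mxE subr_eq0; apply/eqP => /esym.
apply: expi_inj; apply: ang_diff; rewrite hij /=; exact: ltn_ord.
Qed.

Lemma kron_idx p q (i j : 'I_(p * q)) :
  kron_fst i = kron_fst j -> kron_snd i = kron_snd j -> i = j.
Proof.
move=> [h1] [h2]; apply: val_inj => /=.
by rewrite (divn_eq i q) (divn_eq j q) h1 h2.
Qed.

Lemma kron_pair_lt p q (a : 'I_p) (b : 'I_q) : (a * q + b < p * q)%N.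
Proof.
have ha := ltn_ord a; have hb := ltn_ord b.
have : (a.+1 * q <= p * q)%N by apply: leq_mul.
rewrite mulSn; lia.
Qed.

Definition kron_pair p q (a : 'I_p) (b : 'I_q) : 'I_(p * q) := Ordinal (kron_pair_lt a b).

Lemma kron_fst_pair p q (a : 'I_p) (b : 'I_q) : kron_fst (kron_pair a b) = a.
Proof.
apply: val_inj => /=; have hq : (0 < q)%N by apply: leq_ltn_trans (ltn_ord b).
by rewrite divnMDl // divn_small ?addn0.
Qed.

Lemma kron_snd_pair p q (a : 'I_p) (b : 'I_q) : kron_snd (kron_pair a b) = b.
Proof.
apply: val_inj => /=.
by rewrite modnMDl modn_small.
Qed.

Lemma kron_pairK p q (k : 'I_(p * q)) : kron_pair (kron_fst k) (kron_snd k) = k.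
Proof. by apply: kron_idx; rewrite ?kron_fst_pair ?kron_snd_pair. Qed.

Lemma sum_kron p q (F : 'I_(p * q) -> C) :
  \sum_(k < p * q) F k = \sum_(a < p) \sum_(b < q) F (kron_pair a b).
Proof.
rewrite pair_big /=.
rewrite (reindex (fun k : 'I_(p * q) => (kron_fst k, kron_snd k))) /=.
  by apply: eq_bigr => k _; rewrite kron_pairK.
exists (fun ab : 'I_p * 'I_q => kron_pair ab.1 ab.2) => [k _|[a b] _] /=.
  exact: kron_pairK.
by rewrite kron_fst_pair kron_snd_pair.
Qed.

Lemma kron_mul p q (A C' : 'M[C]_p) (B D : 'M[C]_q) :
  kronmx A B *m kronmx C' D = kronmx (A *m C') (B *m D).
Proof.
apply/matrixP => i j; rewrite !mxE big_distrlr /= sum_kron.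
apply: eq_bigr => a _; apply: eq_bigr => b _.
by rewrite !mxE kron_fst_pair kron_snd_pair mulrACA.
Qed.

Lemma kron1 p q : kronmx (1%:M : 'M[C]_p) (1%:M : 'M[C]_q) = 1%:M.
Proof.
apply/matrixP => i j; rewrite !mxE.
case: (eqVneq i j) => [->|hij]; first by rewrite !eqxx mulr1.
case: (eqVneq (kron_fst i) (kron_fst j)) => [h1|h1]; last by rewrite mul0r.
case: (eqVneq (kron_snd i) (kron_snd j)) => [h2|h2]; last by rewrite mulr0.
by case/eqP: hij; apply: kron_idx.
Qed.

Lemma kronDl p q (A A' : 'M[C]_p) (B : 'M[C]_q) :
  kronmx (A + A') B = kronmx A B + kronmx A' B.
Proof. by apply/matrixP => i j; rewrite !mxE mulrDl. Qed.

Lemma char_poly_sim n (A D F : 'M[C]_n) :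
  F \in unitmx -> A *m F = F *m D -> char_poly A = char_poly D.
Proof.
move=> Fu AF.
set Fx := map_mx (@polyC C) F; set Gx := map_mx (@polyC C) (invmx F).
have FG : Fx *m Gx = 1%:M by rewrite -map_mxM mulmxV // map_mx1.
have key : char_poly_mx A *m Fx = Fx *m char_poly_mx D.
  rewrite /char_poly_mx mulmxBl mulmxBr -map_mxM AF map_mxM.
  by rewrite scalar_mxC.
have : \det (char_poly_mx A) * \det Fx * \det Gx = \det Fx * \det (char_poly_mx D) * \det Gx.
  by rewrite -!det_mulmx key.
rewrite -mulrA -det_mulmx FG det1 mulr1 [RHS]mulrAC -det_mulmx FG det1 mul1r.
by [].
Qed.

End chunkCc.

Section chunkD.

Local Open Scope R_scope.

Definition ev p q t f (k : 'I_(p * q)) : R := dd p t (kron_fst k) + dd q f (kron_snd k).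

Local Open Scope ring_scope.

Lemma charDG p q t f :
  char_poly (DeltaG p q t f) = \prod_(k < p * q) ('X - (RtoC (ev t f k))%:P).
Proof.
set F := kronmx (Fm p t) (Fm q f).
have Fu : F \in unitmx.
  have : kronmx (invmx (Fm p t)) (invmx (Fm q f)) *m F = 1%:M.
    by rewrite /F kron_mul !mulVmx ?Fm_unit // kron1.
  by case/mulmx1_unit.
set E : 'M[C]_(p * q) := diag_mx (\row_k RtoC (ev t f k)).
have -> : \prod_(k < p * q) ('X - (RtoC (ev t f k))%:P) = char_poly E.
  by rewrite char_poly_trig ?diag_mx_is_trig //; apply: eq_bigr => k _; rewrite !mxE eqxx mulr1n.
apply: (char_poly_sim Fu).
have -> : E = kronmx (Dm p t) 1%:M + kronmx 1%:M (Dm q f).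
  apply/matrixP => i j; rewrite !mxE.
  case: (eqVneq i j) => [->|hij].
    by rewrite !eqxx !mulr1n mulr1 mul1r /ev RtoCD.
  rewrite mulr0n.
  case: (eqVneq (kron_fst i) (kron_fst j)) => [h1|h1] /=; last by rewrite ?mulr0n ?mulr0 ?mul0r ?addr0 ?add0r.
  case: (eqVneq (kron_snd i) (kron_snd j)) => [h2|h2] /=; last by rewrite ?mulr0n ?mulr0 ?mul0r ?addr0 ?add0r.
  by case/eqP: hij; apply: kron_idx.
rewrite /DeltaG /F mulmxDl mulmxDr !kron_mul !Delta_F !mul1mx !mulmx1.
by [].
Qed.

End chunkD.

Section chunkE.

Local Open Scope ring_scope.

Definition srt n (f : 'I_n -> R) : seq R := sort <=%R [seq f i | i <- enum 'I_n].
Definition lam n (f : 'I_n -> R) (j : nat) : R := nth 0 (srt f) j.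

Lemma size_srt n (f : 'I_n -> R) : size (srt f) = n.
Proof. by rewrite /srt size_sort size_map size_enum_ord. Qed.

Lemma perm_srt n (f : 'I_n -> R) : perm_eq (srt f) [seq f i | i <- enum 'I_n].
Proof. by rewrite /srt perm_sort. Qed.

Lemma sorted_srt n (f : 'I_n -> R) : sorted <=%R (srt f).
Proof. by apply: sort_sorted; exact: le_total. Qed.

Lemma lam_mono n (f : 'I_n -> R) (i j : nat) : (i <= j)%N -> (j < n)%N -> lam f i <= lam f j.
Proof.
move=> hij hj; apply: (sorted_leq_nth le_trans lexx) => //; first exact: sorted_srt.
  by rewrite inE size_srt; apply: leq_ltn_trans hj.
by rewrite inE size_srt.
Qed.

Lemma nth_map_enum n (T : Type) (x0 : T) (g : 'I_n -> T) (i : nat) (hi : (i < n)%N) :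
  nth x0 [seq g k | k <- enum 'I_n] i = g (Ordinal hi).
Proof.
rewrite (nth_map (Ordinal hi)) ?size_enum_ord //.
by rewrite (nth_ord_enum (Ordinal hi) (Ordinal hi)).
Qed.

Lemma prod_enum n (G : R -> {poly C}) (g : 'I_n -> R) :
  \prod_(x <- [seq g k | k <- enum 'I_n]) G x = \prod_(k < n) G (g k).
Proof. by rewrite big_map big_enum. Qed.

Lemma prod_lam n (G : R -> {poly C}) (f : 'I_n -> R) :
  \prod_(i < n) G (lam f i) = \prod_(i < n) G (f i).
Proof.
rewrite -[RHS]prod_enum -(perm_big _ (perm_srt f)) (big_nth 0) size_srt big_mkord.
by [].
Qed.

Lemma ordered_eigs_lam n (A : 'M[C]_n) (f : 'I_n -> R) :
  char_poly A = \prod_(i < n) ('X - (RtoC (f i))%:P) ->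
  ordered_eigs A (fun i => lam f i).
Proof.
move=> hA; split.
  move=> i j hij; apply/RleP; apply: lam_mono => //.
rewrite hA; symmetry; exact: (prod_lam (fun x => 'X - (RtoC x)%:P)).
Qed.

Lemma ordered_eigs_uniq n (A : 'M[C]_n) (f : 'I_n -> R) (l : 'I_n -> R) :
  char_poly A = \prod_(i < n) ('X - (RtoC (f i))%:P) ->
  ordered_eigs A l -> forall j : 'I_n, l j = lam f j.
Proof.
move=> hA [hl hlA] j.
have hp : \prod_(x <- map RtoC [seq l k | k <- enum 'I_n]) ('X - x%:P) =
          \prod_(x <- map RtoC [seq f k | k <- enum 'I_n]) ('X - x%:P).
  rewrite !big_map; exact: (etrans (esym hlA) hA).
have hperm : perm_eq [seq l k | k <- enum 'I_n] [seq f k | k <- enum 'I_n].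
  apply: (perm_map_inj RtoC_inj); exact: prod_XsubC_eq hp.
have hs : sorted <=%R [seq l k | k <- enum 'I_n].
  apply/(sortedP 0) => i; rewrite size_map size_enum_ord => hi.
  rewrite (nth_map_enum _ _ hi) (nth_map_enum _ _ (ltnW hi)).
  by apply/RleP; apply: hl => /=.
have : [seq l k | k <- enum 'I_n] = srt f.
  rewrite /srt -(sorted_sort le_trans hs).
  by apply/(perm_sortP le_total le_trans le_anti).
move=> /(congr1 (fun s => nth 0 s j)) /=.
rewrite (nth_map_enum _ _ (ltn_ord j)) => h.
by rewrite /lam -h; congr l; apply: val_inj.
Qed.

Lemma band_iff p q (j : 'I_(p * q)) x :
  band p q j x <->
  exists t f, Rle 0 t /\ Rle t PI /\ Rle 0 f /\ Rle f PI /\ lam (@ev p q t f) j = x.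
Proof.
split.
  move=> [t [f [h1 [h2 [h3 [h4 [l [hl hlj]]]]]]]].
  exists t, f; do 4! (split => //).
  by rewrite -hlj (ordered_eigs_uniq (charDG p q t f) hl).
move=> [t [f [h1 [h2 [h3 [h4 hx]]]]]].
exists t, f; do 4! (split => //).
exists (fun i => lam (@ev p q t f) i); split => //.
exact: ordered_eigs_lam (charDG p q t f).
Qed.

End chunkE.

Section chunkF.

Local Open Scope R_scope.

Lemma decomp (N : nat) (s : R) : 0 <= s < 2 * PI * (INR N + 1) ->
  exists k : nat, (k <= N)%N /\ exists u, 0 <= u < 2 * PI /\ s = u + 2 * INR k * PI.
Proof.
have hpi := PI_RGT_0.
elim: N s => [|N IH] s [h1 h2].
  exists 0%N; split => //; exists s; split; first by simpl in h2; lra.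
  simpl; ring.
case: (Rlt_le_dec s (2 * PI)) => hs.
  exists 0%N; split => //; exists s; split; first lra.
  simpl; ring.
have h2' : s - 2 * PI < 2 * PI * (INR N + 1) by rewrite S_INR in h2; lra.
have [k [hk [u [hu hsu]]]] := IH (s - 2 * PI) (conj (ltac:(lra) : 0 <= s - 2 * PI) h2').
exists k.+1; split; first by [].
exists u; split => //; rewrite S_INR; lra.
Qed.

Lemma cos_2PI_minus a : cos (2 * PI - a) = cos a.
Proof. rewrite cos_minus cos_2PI sin_2PI; ring. Qed.

Lemma cover1 (r : nat) (a : R) : (0 < r)%N -> 0 <= a <= PI ->
  exists t, exists k : nat, 0 <= t <= PI /\ (k < r)%N /\ cos (ang r t k) = cos a.
Proof.
move=> hr [ha1 ha2].
have hpi := PI_RGT_0.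
have hR : 0 < INR r by apply: lt_0_INR; lia.
have hR1 : 1 <= INR r by apply: (le_INR 1); lia.
set s := INR r * a.
have hs : 0 <= s < 2 * PI * (INR r + 1).
  rewrite /s; split; first nra. nra.
have [k [hk [u [hu hsu]]]] := decomp hs.
have hk2 : 2 * INR k <= INR r.
  have : 2 * INR k * PI <= INR r * PI by rewrite /s in hsu; nra.
  move=> h; apply: (Rmult_le_reg_r PI) => //; lra.
have hk2n : (2 * k <= r)%N.
  apply/ssrnat.leP; apply: INR_le; rewrite mult_INR; simpl; lra.
case: (Rle_lt_dec u PI) => hu2.
  exists u, k; split; first lra.
  split; first lia.
  congr cos; rewrite /ang -hsu /s; field; lra.
exists (2 * PI - u), (r - k.+1)%N; split; first lra.
split; first lia.
have e : ((r - k.+1) + k.+1 = r)%N by lia.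
have hI : INR (r - k.+1) = INR r - INR k - 1.
  have := f_equal INR e; rewrite plus_INR S_INR; lra.
rewrite -cos_2PI_minus; congr cos; rewrite /ang hI.
have hsa : a = (u + 2 * INR k * PI) / INR r.
  rewrite -hsu /s; field; lra.
rewrite hsa; field; lra.
Qed.

Lemma ev_bound p q t f (k : 'I_(p * q)) : -4 <= ev t f k <= 4.
Proof.
rewrite /ev /dd.
have := COS_bound (ang p t (kron_fst k)); have := COS_bound (ang q f (kron_snd k)).
lra.
Qed.

Lemma lam_in n (f : 'I_n -> R) (j : 'I_n) : exists k, lam f j = f k.
Proof.
have : lam f j \in srt f by rewrite /lam mem_nth // size_srt.
rewrite (perm_mem (perm_srt f)) => /mapP [k _ ->]; by exists k.
Qed.

Lemma part1 p q (hp : (0 < p)%N) (hq : (0 < q)%N) (x : R) :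
  (exists j : 'I_(p * q), band p q j x) <-> (Rle (-4) x /\ Rle x 4).
Proof.
split.
  move=> [j /band_iff [t [f [_ [_ [_ [_ hx]]]]]]].
  have [k hk] := lam_in (@ev p q t f) j.
  have := ev_bound t f k; rewrite -hk hx; lra.
move=> hx.
set a := acos (x / 4).
have ha : 0 <= a <= PI by apply: acos_bound.
have hca : cos a = x / 4 by apply: cos_acos; lra.
have [t [k1 [ht [hk1 hc1]]]] := cover1 hp ha.
have [f [k2 [hf [hk2 hc2]]]] := cover1 hq ha.
set K := kron_pair (Ordinal hk1) (Ordinal hk2).
have hK : @ev p q t f K = x.
  rewrite /ev /K kron_fst_pair kron_snd_pair /dd /= hc1 hc2 hca; field.
have hin : x \in srt (@ev p q t f).
  by rewrite (perm_mem (perm_srt _)); apply/mapP; exists K; rewrite ?mem_enum.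
have hj : (index x (srt (@ev p q t f)) < p * q)%N.
  by apply: (leq_trans _ (eq_leq (size_srt (@ev p q t f)))); rewrite index_mem.
exists (Ordinal hj); apply/band_iff; exists t, f.
split; first lra. split; first lra. split; first lra. split; first lra.
by rewrite /lam /= nth_index.
Qed.

End chunkF.

Section chunkG.

Local Open Scope ring_scope.

Lemma count_sorted_ge (s : seq R) (j : nat) : sorted <=%R s -> (j < size s)%N ->
  (j.+1 <= count (fun x : R => (x <= nth 0 s j)%R) s)%N.
Proof.
move=> hs hj.
set P := (fun x : R => (x <= nth 0 s j)%R).
rewrite -[s in count P s](cat_take_drop j.+1 s) count_cat.
apply: leq_trans (leq_addr _ _).
have hsz : size (take j.+1 s) = j.+1 by rewrite size_takel.
have : all P (take j.+1 s).
  apply/allP => x /(nthP 0) [i hi <-].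
  rewrite hsz in hi; rewrite nth_take //.
  apply: (sorted_leq_nth le_trans lexx) => //; rewrite inE //.
  by apply: leq_ltn_trans hj.
rewrite all_count => /eqP hc.
by rewrite hc hsz.
Qed.

Lemma count_sorted_lt (s : seq R) (j : nat) (a : R) : sorted <=%R s -> (j < size s)%N ->
  a < nth 0 s j -> (count (fun x : R => (x <= a)%R) s <= j)%N.
Proof.
move=> hs hj ha.
rewrite -(cat_take_drop j s) count_cat.
have -> : count (fun x : R => (x <= a)%R) (drop j s) = 0%N.
  apply/eqP; rewrite -leqn0 leqNgt -has_count; apply/hasPn => x /(nthP 0) [i hi <-].
  rewrite nth_drop -ltNge; apply: (lt_le_trans ha).
  rewrite size_drop in hi.
  apply: (sorted_leq_nth le_trans lexx) => //; rewrite ?inE.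
    by rewrite -ltn_subRL.
  exact: leq_addr.
rewrite addn0; apply: leq_trans (count_size _ _) _.
by rewrite size_take hj.
Qed.

Lemma lam_mono_shift n (f g : 'I_n -> R) (d : R) (j : nat) : (j < n)%N ->
  (forall k, f k <= g k + d) -> lam f j <= lam g j + d.
Proof.
move=> hj hfg.
rewrite leNgt; apply/negP => hlt.
set a := lam g j + d.
have h1 : (j.+1 <= count (fun x : R => (x <= lam g j)%R) (srt g))%N.
  by apply: count_sorted_ge; rewrite ?sorted_srt ?size_srt.
have h2 : (count (fun x : R => (x <= a)%R) (srt f) <= j)%N.
  by apply: count_sorted_lt; rewrite ?sorted_srt ?size_srt.
have : (count (fun x : R => (x <= lam g j)%R) (srt g) <= count (fun x : R => (x <= a)%R) (srt f))%N.
  rewrite (permP (perm_srt g)) (permP (perm_srt f)) !count_map.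
  apply: sub_count => k /= hk; apply: (le_trans (hfg k)).
  by rewrite /a lerD2r.
lia.
Qed.

Lemma abs_bounds (x d : R) : Rle (Rabs x) d -> Rle (Ropp d) x /\ Rle x d.
Proof.
move=> h; have h1 := Rle_abs x; have h2 := Rle_abs (Ropp x); rewrite Rabs_Ropp in h2.
split; lra.
Qed.

Lemma lam_lip n (f g : 'I_n -> R) (d : R) (j : nat) : (j < n)%N ->
  (forall k, Rle (Rabs (Rminus (f k) (g k))) d) -> Rle (Rabs (Rminus (lam f j) (lam g j))) d.
Proof.
move=> hj h.
have h1 : lam f j <= lam g j + d.
  apply: lam_mono_shift => // k; have := h k => /abs_bounds [h1 h2].
  apply/RleP; rewrite /GRing.add /=; lra.
have h2 : lam g j <= lam f j + d.
  apply: lam_mono_shift => // k; have := h k => /abs_bounds [h1' h2'].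
  apply/RleP; rewrite /GRing.add /=; lra.
move/RleP: h1; move/RleP: h2 => h2 h1.
apply: Rabs_le; rewrite /GRing.add /= in h1 h2; lra.
Qed.

End chunkG.

Section chunkH.

Local Open Scope R_scope.

Lemma cos_lip x y : Rabs (cos x - cos y) <= Rabs (x - y).
Proof.
have [c [hc _]] := MVT_abs cos (fun c => - sin c) y x
  (fun c _ => derivable_pt_lim_cos c).
rewrite hc Rabs_Ropp; have := SIN_bound c => hs.
have h : Rabs (sin c) <= 1 by apply: Rabs_le; lra.
have := Rabs_pos (x - y); nra.
Qed.

Lemma lip_cont (g : R -> R) (L : R) : 0 <= L ->
  (forall x y, Rabs (g x - g y) <= L * Rabs (x - y)) -> forall x, continuity_pt g x.
Proof.
move=> hL hg x eps heps.
exists (eps / (L + 1)); split.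
  apply: Rdiv_lt_0_compat; lra.
move=> y [_ hy]; rewrite /R_dist /= in hy *.
apply: (Rle_lt_trans _ _ _ (hg y x)).
have h1 : L * Rabs (y - x) <= L * (eps / (L + 1)).
  apply: Rmult_le_compat_l => //; apply: Rlt_le; exact: hy.
have h2 : L * (eps / (L + 1)) < eps.
  have : L * (eps / (L + 1)) = eps * (L / (L + 1)) by field; lra.
  move=> ->; rewrite -{2}(Rmult_1_r eps); apply: Rmult_lt_compat_l => //.
  apply/(Rmult_lt_reg_r (L + 1)); first lra.
  rewrite /Rdiv Rmult_assoc Rinv_l; lra.
lra.
Qed.

Definition Lip2 (F : R -> R -> R) :=
  forall t f t' f', Rabs (F t f - F t' f') <= 2 * Rabs (t - t') + 2 * Rabs (f - f').

Lemma sq_max (F : R -> R -> R) : Lip2 F ->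
  exists t0 f0, 0 <= t0 <= PI /\ 0 <= f0 <= PI /\
    forall t f, 0 <= t <= PI -> 0 <= f <= PI -> F t f <= F t0 f0.
Proof.
move=> hF.
have hpi := PI_RGT_0.
have hex : forall t, exists Mx, (forall c, 0 <= c <= PI -> F t c <= F t Mx) /\ 0 <= Mx <= PI.
  move=> t; apply: continuity_ab_maj; first lra.
  move=> c _; apply: (@lip_cont _ 2); first lra.
  move=> x y; have := hF t x t y; rewrite Rminus_diag Rabs_R0; lra.
pose phi t := proj1_sig (constructive_indefinite_description _ (hex t)).
have hphi : forall t, (forall c, 0 <= c <= PI -> F t c <= F t (phi t)) /\ 0 <= phi t <= PI.
  by move=> t; rewrite /phi; case: constructive_indefinite_description.
pose G t := F t (phi t).
have hG : forall t t', G t <= G t' + 2 * Rabs (t - t').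
  move=> t t'; rewrite /G.
  have h1 := hF t (phi t) t' (phi t); rewrite Rminus_diag Rabs_R0 in h1.
  have [hm hb] := hphi t'; have := hm (phi t) (proj2 (hphi t)).
  have := Rle_abs (F t (phi t) - F t' (phi t)); lra.
have hGc : forall x, continuity_pt G x.
  apply: (@lip_cont _ 2); first lra.
  move=> x y; apply: Rabs_le; have := hG x y; have := hG y x.
  rewrite (Rabs_minus_sym y x); lra.
have [t0 [ht0 hb0]] := continuity_ab_maj G 0 PI (Rlt_le _ _ hpi) (fun c _ => hGc c).
exists t0, (phi t0); split => //; split; first exact: proj2 (hphi t0).
move=> t f ht hf.
have := proj1 (hphi t) f hf; have := ht0 t ht; rewrite /G; lra.
Qed.

Lemma sq_min (F : R -> R -> R) : Lip2 F ->
  exists t0 f0, 0 <= t0 <= PI /\ 0 <= f0 <= PI /\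
    forall t f, 0 <= t <= PI -> 0 <= f <= PI -> F t0 f0 <= F t f.
Proof.
move=> hF.
have hF' : Lip2 (fun t f => - F t f).
  move=> t f t' f'; rewrite (_ : - F t f - - F t' f' = - (F t f - F t' f')); last ring.
  by rewrite Rabs_Ropp.
have [t0 [f0 [h1 [h2 h3]]]] := sq_max hF'.
exists t0, f0; split => //; split => // t f ht hf; have := h3 t f ht hf; lra.
Qed.

End chunkH.

Section chunkI.

Local Open Scope R_scope.

Lemma ang_lip r t t' (a : nat) : (0 < r)%N -> Rabs (ang r t a - ang r t' a) <= Rabs (t - t').
Proof.
move=> hr.
have hR : 1 <= INR r by apply: (le_INR 1); lia.
rewrite (_ : ang r t a - ang r t' a = (t - t') * / INR r); last by rewrite /ang; field; lra.
rewrite Rabs_mult (Rabs_right (/ INR r)); last by apply: Rle_ge; apply: Rlt_le; apply: Rinv_0_lt_compat; lra.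
have h1 : / INR r <= 1.
  rewrite -Rinv_1; apply: Rinv_le_contravar; lra.
have := Rabs_pos (t - t'); have : 0 < / INR r by apply: Rinv_0_lt_compat; lra.
nra.
Qed.

Lemma ev_lip p q (hp : (0 < p)%N) (hq : (0 < q)%N) t f t' f' (k : 'I_(p * q)) :
  Rabs (ev t f k - ev t' f' k) <= 2 * Rabs (t - t') + 2 * Rabs (f - f').
Proof.
rewrite /ev /dd.
set A := ang p t _; set A' := ang p t' _; set B := ang q f _; set B' := ang q f' _.
rewrite (_ : 2 * cos A + 2 * cos B - (2 * cos A' + 2 * cos B') =
             2 * (cos A - cos A') + 2 * (cos B - cos B')); last ring.
apply: Rle_trans (Rabs_triang _ _) _.
rewrite !Rabs_mult (Rabs_right 2); last lra.
have h1 := cos_lip A A'; have h2 := cos_lip B B'.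
have h3 : Rabs (A - A') <= Rabs (t - t') by exact: ang_lip.
have h4 : Rabs (B - B') <= Rabs (f - f') by exact: ang_lip.
lra.
Qed.

Lemma lam_Lip2 p q (hp : (0 < p)%N) (hq : (0 < q)%N) (j : 'I_(p * q)) :
  Lip2 (fun t f => lam (@ev p q t f) j).
Proof.
move=> t f t' f'; apply: lam_lip; first exact: ltn_ord.
move=> k; exact: ev_lip.
Qed.


End chunkI.

Theorem mainTheorem12 (p q : nat) (hp : (0 < p)%N) (hq : (0 < q)%N) :
  (forall x : R,
     (exists j : 'I_(p * q), band p q j x) <-> (Rle (-4) x /\ Rle x 4)) /\
  (forall j k : 'I_(p * q), nat_of_ord k = (nat_of_ord j).+1 ->
     exists M m : R,
       is_max_of (band p q j) M /\ is_min_of (band p q k) m /\ Rle m M).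
Proof.
split; first exact: part1.
move=> j k hjk.
have [t0 [f0 [ht0 [hf0 hmax]]]] := sq_max (lam_Lip2 hp hq j).
have [t1 [f1 [ht1 [hf1 hmin]]]] := sq_min (lam_Lip2 hp hq k).
set M := lam (@ev p q t0 f0) j; set m := lam (@ev p q t1 f1) k.
have hMb : band p q j M.
  apply/band_iff; exists t0, f0; move: ht0 hf0 => [? ?] [? ?]; do 4! (split => //).
have hmb : band p q k m.
  apply/band_iff; exists t1, f1; move: ht1 hf1 => [? ?] [? ?]; do 4! (split => //).
exists M, m; split.
  split => // x /band_iff [t [f [? [? [? [? <-]]]]]]; apply: hmax; split => //.
split.
  split => // x /band_iff [t [f [? [? [? [? <-]]]]]]; apply: hmin; split => //.
apply: Rnot_lt_le => hlt.
have hM4 := proj1 (part1 hp hq M) (ex_intro _ j hMb).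
have hm4 := proj1 (part1 hp hq m) (ex_intro _ k hmb).
set y := Rdiv (Rplus M m) 2.
have [i /band_iff [t [f [? [? [? [? hy]]]]]]] := proj2 (part1 hp hq y) (ltac:(rewrite /y; lra)).
case: (leqP i j) => hij.
  have h1 : Rle (lam (@ev p q t f) i) (lam (@ev p q t f) j).
    by apply/RleP; apply: lam_mono => //; exact: ltn_ord.
  have h2 : Rle (lam (@ev p q t f) j) M by apply: hmax; split.
  rewrite hy /y in h1; lra.
have h1 : Rle (lam (@ev p q t f) k) (lam (@ev p q t f) i).
  by apply/RleP; apply: lam_mono; rewrite ?hjk //; exact: ltn_ord.
have h2 : Rle m (lam (@ev p q t f) k) by apply: hmin; split.
rewrite hy /y in h1; lra.
Qed.
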